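(* Let $b_1,\dots,b_5$ and $\alpha_1,\dots,\alpha_5$ be positive real numbers with $\sum_{i=1}^5\alpha_i=\pi$ (in particular $(b_1,\dots,b_5)$ may be any rearrangement of given positive reals $a_1,\dots,a_5$ with $b_1=a_1$). Then $$\sum_{i=1}^5 b_i\cos\alpha_i\;\le\;\frac{1+\sqrt5}{4}\cdot\frac{1}{b_1b_2b_3b_4b_5}\,\phi(b_1^2,b_2^2,b_3^2,b_4^2,b_5^2).$$
   Context: For real numbers $x_1,\dots,x_5$, define $\phi(x_1,x_2,x_3,x_4,x_5)=x_1x_2x_3+x_2x_3x_4+x_3x_4x_5+x_4x_5x_1+x_5x_1x_2$. *)

(* Defs.v *)
From Stdlib Require Import Reals.
Open Scope R_scope.

Definition phi (x1 x2 x3 x4 x5 : R) : R :=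
  x1*x2*x3 + x2*x3*x4 + x3*x4*x5 + x4*x5*x1 + x5*x1*x2.

(* Main.v *)
Require Import Defs.
From Stdlib Require Import Reals Lra Psatz.
Open Scope R_scope.
Lemma quad (s x1 x2 x3 x4 x5 : R) : s*s = 5 -> 0 < s ->
  x1*x2+x2*x3+x3*x4+x4*x5-x5*x1 <= (1+s)/4*(x1*x1+x2*x2+x3*x3+x4*x4+x5*x5).
Proof. intros Hs Hp.
assert (G : forall c d x y, c*(x - d*y)*(x-d*y) = c*x*x - 2*(c*d)*x*y + (c*(d*d))*y*y) by (intros; ring).
assert (cd : (1+s)/4*((s-1)/2) = /2) by (field_simplify; nra).
assert (cd2 : (1+s)/4*((s-1)/2*((s-1)/2)) = (s-1)/4) by (field_simplify; nra).
assert (H1 := Rle_0_sqr (x1 - (s-1)/2*(x2-x5))).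
assert (H2 := Rle_0_sqr (x3 - (s-1)/2*(x2+x4))).
assert (H3 := Rle_0_sqr (x5 + (s-1)/2*x2 - x4)).
assert (Hc : 0 <= (1+s)/4) by lra.
assert (K1 := Rmult_le_pos _ _ Hc H1).
assert (K2 := Rmult_le_pos _ _ Hc H2).
unfold Rsqr in *. rewrite <- Rmult_assoc, G, cd, cd2 in K1, K2.
assert (H3' : 0 <= (x5 - x4)*(x5-x4) + 2*((s-1)/2)*(x5-x4)*x2 + ((s-1)/2*((s-1)/2))*x2*x2) by (eapply Rle_trans; [exact H3| right; ring]).
assert (dd : (s-1)/2*((s-1)/2) = (3-s)/2) by (field_simplify; nra).
rewrite dd in H3'. nra.
Qed.
Lemma core (u1 u2 u3 u4 u5 a1 a2 a3 a4 a5 : R) : a1+a2+a3+a4+a5 = PI ->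
  u1*u2*cos a1 + u2*u3*cos a2 + u3*u4*cos a3 + u4*u5*cos a4 + u5*u1*cos a5
  <= (1 + sqrt 5)/4 * (u1*u1+u2*u2+u3*u3+u4*u4+u5*u5).
Proof. intros H.
assert (Hs : sqrt 5 * sqrt 5 = 5) by (apply sqrt_sqrt; lra).
assert (Hp : 0 < sqrt 5) by (apply sqrt_lt_R0; lra).
pose (t2 := a1). pose (t3 := a1+a2). pose (t4 := a1+a2+a3). pose (t5 := a1+a2+a3+a4).
assert (E1 : cos a1 = cos t2 * cos 0 + sin t2 * sin 0) by (rewrite <- cos_minus; f_equal; unfold t2; ring).
assert (E2 : cos a2 = cos t3 * cos t2 + sin t3 * sin t2) by (rewrite <- cos_minus; f_equal; unfold t2,t3; ring).
assert (E3 : cos a3 = cos t4 * cos t3 + sin t4 * sin t3) by (rewrite <- cos_minus; f_equal; unfold t4,t3; ring).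
assert (E4 : cos a4 = cos t5 * cos t4 + sin t5 * sin t4) by (rewrite <- cos_minus; f_equal; unfold t4,t5; ring).
assert (E5 : cos a5 = - (cos t5 * cos 0 + sin t5 * sin 0)).
{ rewrite <- cos_minus. replace a5 with (PI - (t5 - 0)) by (unfold t5; lra). apply Rtrigo_facts.cos_pi_minus. }
rewrite cos_0, sin_0 in E1, E5.
rewrite E1, E2, E3, E4, E5.
assert (Q1 := quad _ (u1*1) (u2*cos t2) (u3*cos t3) (u4*cos t4) (u5*cos t5) Hs Hp).
assert (Q2 := quad _ (u1*0) (u2*sin t2) (u3*sin t3) (u4*sin t4) (u5*sin t5) Hs Hp).
assert (P2 := sin2_cos2 t2). assert (P3 := sin2_cos2 t3).
assert (P4 := sin2_cos2 t4). assert (P5 := sin2_cos2 t5). unfold Rsqr in *.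
assert (R : (1 + sqrt 5)/4 * (u1*u1+u2*u2+u3*u3+u4*u4+u5*u5) =
  (1 + sqrt 5)/4 * ((u1*1)*(u1*1) + (u2*cos t2)*(u2*cos t2) + (u3*cos t3)*(u3*cos t3) + (u4*cos t4)*(u4*cos t4) + (u5*cos t5)*(u5*cos t5))
 + (1 + sqrt 5)/4 * ((u1*0)*(u1*0) + (u2*sin t2)*(u2*sin t2) + (u3*sin t3)*(u3*sin t3) + (u4*sin t4)*(u4*sin t4) + (u5*sin t5)*(u5*sin t5))).
{ transitivity ((1 + sqrt 5)/4 * (u1*u1+u2*u2*(sin t2 * sin t2 + cos t2 * cos t2)+u3*u3*(sin t3 * sin t3 + cos t3 * cos t3)+u4*u4*(sin t4 * sin t4 + cos t4 * cos t4)+u5*u5*(sin t5 * sin t5 + cos t5 * cos t5))).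
  rewrite P2, P3, P4, P5; ring. ring. }
rewrite R. 
match goal with |- ?L <= _ => replace L with ((u1*1)*(u2*cos t2)+(u2*cos t2)*(u3*cos t3)+(u3*cos t3)*(u4*cos t4)+(u4*cos t4)*(u5*cos t5)-(u5*cos t5)*(u1*1) + ((u1*0)*(u2*sin t2)+(u2*sin t2)*(u3*sin t3)+(u3*sin t3)*(u4*sin t4)+(u4*sin t4)*(u5*sin t5)-(u5*sin t5)*(u1*0))) by ring end.
lra.
Qed.
Lemma prod_sq (x y b : R) : 0 <= x -> 0 <= y -> 0 < b -> x*y = b*b -> sqrt x * sqrt y = b.
Proof. intros. rewrite <- sqrt_mult by auto. rewrite H2. apply sqrt_square. lra. Qed.

Theorem lemma2 (b1 b2 b3 b4 b5 al1 al2 al3 al4 al5 : R) :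
  0 < b1 -> 0 < b2 -> 0 < b3 -> 0 < b4 -> 0 < b5 ->
  0 < al1 -> 0 < al2 -> 0 < al3 -> 0 < al4 -> 0 < al5 ->
  al1 + al2 + al3 + al4 + al5 = PI ->
  b1 * cos al1 + b2 * cos al2 + b3 * cos al3 + b4 * cos al4 + b5 * cos al5
  <= (1 + sqrt 5) / 4 * (1 / (b1 * b2 * b3 * b4 * b5))
     * phi (b1^2) (b2^2) (b3^2) (b4^2) (b5^2).
Proof.
intros h1 h2 h3 h4 h5 _ _ _ _ _ H.
pose (T1 := b1*b2*b3/(b4*b5)). pose (T2 := b2*b3*b4/(b5*b1)).
pose (T3 := b3*b4*b5/(b1*b2)). pose (T4 := b4*b5*b1/(b2*b3)).
pose (T5 := b5*b1*b2/(b3*b4)).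
assert (p1 : 0 <= T1) by (unfold T1; apply Rlt_le, Rdiv_lt_0_compat; apply Rmult_lt_0_compat || idtac; try apply Rmult_lt_0_compat; auto).
assert (p2 : 0 <= T2) by (unfold T2; apply Rlt_le, Rdiv_lt_0_compat; apply Rmult_lt_0_compat || idtac; try apply Rmult_lt_0_compat; auto).
assert (p3 : 0 <= T3) by (unfold T3; apply Rlt_le, Rdiv_lt_0_compat; apply Rmult_lt_0_compat || idtac; try apply Rmult_lt_0_compat; auto).
assert (p4 : 0 <= T4) by (unfold T4; apply Rlt_le, Rdiv_lt_0_compat; apply Rmult_lt_0_compat || idtac; try apply Rmult_lt_0_compat; auto).
assert (p5 : 0 <= T5) by (unfold T5; apply Rlt_le, Rdiv_lt_0_compat; apply Rmult_lt_0_compat || idtac; try apply Rmult_lt_0_compat; auto).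
assert (e1 : sqrt T4 * sqrt T1 = b1) by (apply prod_sq; auto; unfold T4, T1; field; lra).
assert (e3 : sqrt T1 * sqrt T3 = b3) by (apply prod_sq; auto; unfold T3, T1; field; lra).
assert (e5 : sqrt T3 * sqrt T5 = b5) by (apply prod_sq; auto; unfold T3, T5; field; lra).
assert (e2 : sqrt T5 * sqrt T2 = b2) by (apply prod_sq; auto; unfold T5, T2; field; lra).
assert (e4 : sqrt T2 * sqrt T4 = b4) by (apply prod_sq; auto; unfold T2, T4; field; lra).
assert (C := core (sqrt T4) (sqrt T1) (sqrt T3) (sqrt T5) (sqrt T2) al1 al3 al5 al2 al4 ltac:(lra)).
rewrite e1, e3, e5, e2, e4 in C.
rewrite !sqrt_sqrt in C by auto.
replace ((1 + sqrt 5) / 4 * (1 / (b1 * b2 * b3 * b4 * b5)) * phi (b1^2) (b2^2) (b3^2) (b4^2) (b5^2))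
  with ((1 + sqrt 5) / 4 * (T4+T1+T3+T5+T2)).
- lra.
- unfold phi, T1, T2, T3, T4, T5. field. repeat split; lra.
Qed.
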